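(* Let $n\in\mathbb{N}$, $0\le x_0<x_1<\cdots<x_n$, $I:=[x_0,x_n]$, and for $i\in\{1,\dots,n\}$ let $l_i:I\to[x_{i-1},x_i]$ be a contractive homeomorphism with $l_i(x_0)=x_{i-1}$, $l_i(x_n)=x_i$. Let $L:C^+I\to C^+I$ be a bounded semi-linear operator, and let $f,S_1,\dots,S_n\in C^+I$ with $Lf(x_0)=f(x_0)$ and $Lf(x_n)=f(x_n)$. Define $T$ on $C^+I$ by $$Tg:=f+(S_i\circ l_i^{-1})\cdot\big((g-Lf)\circ l_i^{-1}\big)\quad\text{on } I_i,\ i=1,\dots,n,$$ and assume that $Tg$ takes values in $\mathbb{R}_0^+$ and satisfies the join-up conditions $Tg(x_j-)=Tg(x_j+)$ for $j=1,\dots,n-1$, so that $T:C^+I\to C^+I$. Let $S_\infty:=\max_{i}\|S_i\|_\infty$. If $S_\infty<1$, then $T$ is contractive on $(C^+I,d)$, and its unique fixed point $f^*\in C^+I$ satisfies $$f^*=f+(S_i\circ l_i^{-1})\cdot\big((f^*-Lf)\circ l_i^{-1}\big)\quad\text{on } I_i,\ i=1,\dots,n.$$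
   Context: $\mathbb{R}_0^+:=[0,\infty)$. $C^+I:=\{f\in C(I):f(I)\subset\mathbb{R}_0^+\}$, a semi-vector space over $\mathbb{R}_0^+$ (pointwise addition, nonnegative scalar multiplication), with metric $d(f,g):=\max_{x\in I}(\max\{f(x),g(x)\}-\min\{f(x),g(x)\})$, under which it is complete. $\|\cdot\|_\infty$ is the supremum norm. A map $L$ is semi-linear if $L(u+v)=Lu+Lv$ and $L(\lambda u)=\lambda Lu$ for $\lambda\ge0$; it is bounded if $d(Lu,0)\le M\,d(u,0)$ for some $M>0$ and all $u$. $I_i:=[x_{i-1},x_i)$ for $i<n$, $I_n:=[x_{n-1},x_n]$. Contractive means Lipschitz with constant $<1$ with respect to $d$. *)

(* Defs.v *)
From Stdlib Require Import Reals Lra.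
From Coquelicot Require Import Coquelicot.
Open Scope R_scope.

Definition cont_on (a b : R) (g : R -> R) : Prop :=
  forall y, a <= y <= b ->
    filterlim g (within (fun z => a <= z <= b) (locally y)) (locally (g y)).

Definition CplusI (a b : R) (g : R -> R) : Prop :=
  cont_on a b g /\ (forall y, a <= y <= b -> 0 <= g y).

(* The metric d(g,h) = max_{y in [a,b]} (max{g y,h y} - min{g y,h y})
   (written as a supremum, which is attained for continuous g,h). *)
Definition dI (a b : R) (g h : R -> R) : R :=
  real (Lub_Rbar (fun r => exists y, a <= y <= b /\
                    r = Rmax (g y) (h y) - Rmin (g y) (h y))).

Definition in_piece (n : nat) (x : nat -> R) (i : nat) (y : R) : Prop :=
  x (i - 1)%nat <= y /\ (if Nat.eqb i n then y <= x i else y < x i).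

Definition in_pieceb (n : nat) (x : nat -> R) (i : nat) (y : R) : bool :=
  (if Rle_dec (x (i - 1)%nat) y then true else false) &&
  (if Nat.eqb i n then (if Rle_dec y (x i) then true else false)
                  else (if Rlt_dec y (x i) then true else false)).

(* Sum over i = 1..k of the piece contributions (at most one is nonzero). *)
Fixpoint Tpieces (n : nat) (x : nat -> R) (Sc li : nat -> R -> R)
    (Lf g : R -> R) (k : nat) (y : R) : R :=
  match k with
  | O => 0
  | S k' =>
      (if in_pieceb n x k y
       then Sc k (li k y) * (g (li k y) - Lf (li k y)) else 0)
      + Tpieces n x Sc li Lf g k' y
  end.

Definition Tmap (n : nat) (x : nat -> R) (f Lf : R -> R) (Sc li : nat -> R -> R)
    (g : R -> R) : R -> R :=
  fun y => f y + Tpieces n x Sc li Lf g n y.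

Definition semilinear (a b : R) (L : (R -> R) -> (R -> R)) : Prop :=
  (forall u v, CplusI a b u -> CplusI a b v ->
     forall y, a <= y <= b -> L (fun z => u z + v z) y = L u y + L v y) /\
  (forall (lam : R) u, 0 <= lam -> CplusI a b u ->
     forall y, a <= y <= b -> L (fun z => lam * u z) y = lam * L u y).

Definition bounded_op (a b : R) (L : (R -> R) -> (R -> R)) : Prop :=
  exists M, 0 < M /\ forall u, CplusI a b u ->
    dI a b (L u) (fun _ => 0) <= M * dI a b u (fun _ => 0).

(* Main.v *)
Require Import Defs.
From Stdlib Require Import Reals Lra Lia Arith.
From Coquelicot Require Import Coquelicot.
Open Scope R_scope.

Lemma ball_R (y d z : R) : ball y d z <-> Rabs (z - y) < d.
Proof. unfold ball; simpl; unfold AbsRing_ball, abs, minus, plus, opp; simpl. tauto. Qed.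

Definition cont_ed (a b : R) (g : R -> R) := forall y, a <= y <= b ->
  forall eps, 0 < eps -> exists d, 0 < d /\
   forall z, a <= z <= b -> Rabs (z - y) < d -> Rabs (g z - g y) < eps.

Lemma cont_on_ed a b g : cont_on a b g -> cont_ed a b g.
Proof.
  intros H y Hy eps He.
  destruct (proj1 (filterlim_locally _ _) (H y Hy) (mkposreal eps He)) as [d Hd].
  exists d; split; [apply cond_pos|].
  intros z Hz Hzy. apply ball_R. apply Hd; [apply ball_R; exact Hzy| exact Hz].
Qed.

Lemma cont_ed_on a b g : cont_ed a b g -> cont_on a b g.
Proof.
  intros H y Hy. apply (proj2 (filterlim_locally _ _)). intros eps.
  destruct (H y Hy eps (cond_pos eps)) as [d [Hd Hd']].
  exists (mkposreal d Hd). intros z Hz Hz2. apply ball_R. apply ball_R in Hz. apply Hd'; auto.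
Qed.

Lemma cont_ed_plus a b u v : cont_ed a b u -> cont_ed a b v ->
  cont_ed a b (fun z => u z + v z).
Proof.
  intros Hu Hv. apply cont_on_ed. intros y Hy.
  apply cont_ed_on in Hu. apply cont_ed_on in Hv.
  apply (filterlim_comp_2 u v Rplus (Hu y Hy) (Hv y Hy)).
  apply (filterlim_plus (K:=R_AbsRing) (V:=R_NormedModule)).
Qed.

Lemma cont_ed_mult a b u v : cont_ed a b u -> cont_ed a b v ->
  cont_ed a b (fun z => u z * v z).
Proof.
  intros Hu Hv. apply cont_on_ed. intros y Hy.
  apply cont_ed_on in Hu. apply cont_ed_on in Hv.
  apply (filterlim_comp_2 u v Rmult (Hu y Hy) (Hv y Hy)).
  apply (filterlim_mult (K:=R_AbsRing)).
Qed.

Lemma cont_ed_const a b c : cont_ed a b (fun _ => c).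
Proof. intros y Hy eps He. exists 1; split; [lra|]. intros. rewrite Rminus_eq_0, Rabs_R0; lra. Qed.

Lemma cont_ed_opp a b u : cont_ed a b u -> cont_ed a b (fun z => - u z).
Proof.
  intros Hu y Hy eps He. destruct (Hu y Hy eps He) as [d [Hd H]].
  exists d; split; auto. intros z Hz Hzy. 
  replace (- u z - - u y) with (- (u z - u y)) by ring. rewrite Rabs_Ropp. auto.
Qed.

Lemma cont_ed_minus a b u v : cont_ed a b u -> cont_ed a b v ->
  cont_ed a b (fun z => u z - v z).
Proof. intros. apply (cont_ed_plus a b u (fun z => - v z)); auto. apply cont_ed_opp; auto. Qed.

Lemma cont_ed_comp a b c d (h u : R -> R) :
  (forall z, a <= z <= b -> c <= h z <= d) ->
  cont_ed a b h -> cont_ed c d u -> cont_ed a b (fun z => u (h z)).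
Proof.
  intros Hm Hh Hu y Hy eps He.
  destruct (Hu (h y) (Hm y Hy) eps He) as [d1 [Hd1 H1]].
  destruct (Hh y Hy d1 Hd1) as [d2 [Hd2 H2]].
  exists d2; split; auto.
Qed.

Lemma cont_ed_sub a b c d u : a <= c -> d <= b -> cont_ed a b u -> cont_ed c d u.
Proof.
  intros H1 H2 Hu y Hy eps He. destruct (Hu y ltac:(lra) eps He) as [e [He1 He2]].
  exists e; split; auto. intros z Hz Hzy. apply He2; auto; lra.
Qed.

Definition clamp (a b z : R) := Rmax a (Rmin z b).

Lemma clamp_in a b z : a <= b -> a <= clamp a b z <= b.
Proof. intros. unfold clamp, Rmax, Rmin. repeat destruct Rle_dec; lra. Qed.

Lemma clamp_id a b z : a <= z <= b -> clamp a b z = z.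
Proof. intros. unfold clamp, Rmax, Rmin. repeat destruct Rle_dec; lra. Qed.

Lemma clamp_lip a b z w : a <= b -> Rabs (clamp a b z - clamp a b w) <= Rabs (z - w).
Proof. intros. unfold clamp, Rmax, Rmin. unfold Rabs. repeat destruct Rle_dec; repeat destruct Rcase_abs; lra. Qed.

Lemma cont_ed_bounded a b g : a <= b -> cont_ed a b g ->
  exists M, forall y, a <= y <= b -> Rabs (g y) <= M.
Proof.
  intros Hab Hg.
  assert (Hc : forall c, continuity_pt (fun z => g (clamp a b z)) c).
  { intros c. unfold continuity_pt, continue_in, limit1_in, limit_in, D_x, no_cond; simpl.
    unfold R_dist. intros eps He.
    destruct (Hg (clamp a b c) (clamp_in a b c Hab) eps He) as [d [Hd H]].
    exists d; split; auto. intros z [_ Hz]. apply H. apply clamp_in; auto.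
    eapply Rle_lt_trans; [apply clamp_lip; auto| exact Hz]. }
  destruct (continuity_ab_maj (fun z => g (clamp a b z)) a b Hab (fun c _ => Hc c)) as [M1 [HM1 _]].
  destruct (continuity_ab_maj (fun z => - g (clamp a b z)) a b Hab
     (fun c _ => continuity_pt_opp _ _ (Hc c))) as [M2 [HM2 _]].
  exists (Rmax (g (clamp a b M1)) (- g (clamp a b M2))).
  intros y Hy. specialize (HM1 y Hy). specialize (HM2 y Hy). simpl in *.
  rewrite clamp_id in HM1, HM2 by auto.
  unfold Rabs, Rmax. repeat destruct Rle_dec; destruct Rcase_abs; lra.
Qed.

Lemma Rmax_Rmin_abs u v : Rmax u v - Rmin u v = Rabs (u - v).
Proof. unfold Rmax, Rmin, Rabs. repeat destruct Rle_dec; destruct Rcase_abs; lra. Qed.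

Definition dset (a b : R) (g h : R -> R) := (fun r => exists y, a <= y <= b /\
                    r = Rmax (g y) (h y) - Rmin (g y) (h y)).

Lemma dI_props a b g h M : a <= b ->
  (forall y, a <= y <= b -> Rabs (g y - h y) <= M) ->
  (forall y, a <= y <= b -> Rabs (g y - h y) <= dI a b g h) /\
  (forall B, (forall y, a <= y <= b -> Rabs (g y - h y) <= B) -> dI a b g h <= B).
Proof.
  intros Hab HM. unfold dI. fold (dset a b g h).
  destruct (Lub_Rbar_correct (dset a b g h)) as [Hub Hl].
  assert (Hub' : forall y, a <= y <= b -> Rbar_le (Rabs (g y - h y)) (Lub_Rbar (dset a b g h))).
  { intros y Hy. apply Hub. exists y; split; auto. symmetry; apply Rmax_Rmin_abs. }
  assert (Hl' : forall B, (forall y, a <= y <= b -> Rabs (g y - h y) <= B) ->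
      Rbar_le (Lub_Rbar (dset a b g h)) B).
  { intros B HB. apply Hl. intros r [y [Hy ->]]. rewrite Rmax_Rmin_abs. apply HB; auto. }
  assert (HA := Hub' a ltac:(lra)). assert (HM' := Hl' M HM).
  destruct (Lub_Rbar (dset a b g h)) as [l| |]; simpl in *; try contradiction.
  split.
  - intros y Hy. exact (Hub' y Hy).
  - intros B HB. exact (Hl' B HB).
Qed.

Lemma dI_props_c a b g h : a <= b -> cont_ed a b g -> cont_ed a b h ->
  (forall y, a <= y <= b -> Rabs (g y - h y) <= dI a b g h) /\
  (forall B, (forall y, a <= y <= b -> Rabs (g y - h y) <= B) -> dI a b g h <= B).
Proof.
  intros Hab Hg Hh. destruct (cont_ed_bounded a b (fun z => g z - h z) Hab (cont_ed_minus _ _ _ _ Hg Hh)) as [M HM].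
  apply (dI_props a b g h M Hab HM).
Qed.

Lemma x_mono_lt n (x : nat -> R) (Hxinc : forall i, (i < n)%nat -> x i < x (i + 1)%nat) :
  forall i j, (i < j <= n)%nat -> x i < x j.
Proof.
  intros i j. induction j as [|j IH]; intros H; [lia|].
  destruct (Nat.eq_dec i j) as [->|Hne].
  - replace (S j) with (j + 1)%nat by lia. apply Hxinc; lia.
  - apply Rlt_trans with (x j); [apply IH; lia|]. replace (S j) with (j + 1)%nat by lia. apply Hxinc; lia.
Qed.

Lemma x_mono n (x : nat -> R) (Hxinc : forall i, (i < n)%nat -> x i < x (i + 1)%nat) :
  forall i j, (i <= j <= n)%nat -> x i <= x j.
Proof.
  intros i j H. destruct (Nat.eq_dec i j) as [->|]; [lra|]. left; apply (x_mono_lt n); auto; lia.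
Qed.

Lemma in_pieceb_spec n x i y : in_pieceb n x i y = true <-> in_piece n x i y.
Proof.
  unfold in_pieceb, in_piece. destruct (Nat.eqb i n);
  repeat destruct Rle_dec; repeat destruct Rlt_dec; simpl; split; intros; try tauto; try discriminate;
  try lra.
Qed.

Lemma piece_unique n x (Hxinc : forall i, (i < n)%nat -> x i < x (i + 1)%nat) i k y :
  (1 <= i <= n)%nat -> (1 <= k <= n)%nat -> in_piece n x i y -> in_piece n x k y -> i = k.
Proof.
  intros Hi Hk [H1 H2] [H3 H4].
  destruct (Nat.lt_trichotomy i k) as [Hlt|[Heq|Hlt]]; auto; exfalso.
  - assert (Hin : i <> n) by lia. apply Nat.eqb_neq in Hin. rewrite Hin in H2.
    assert (x i <= x (k - 1)%nat) by (apply (x_mono n); auto; lia). lra.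
  - assert (Hin : k <> n) by lia. apply Nat.eqb_neq in Hin. rewrite Hin in H4.
    assert (x k <= x (i - 1)%nat) by (apply (x_mono n); auto; lia). lra.
Qed.

Lemma piece_in_I n x (Hxinc : forall i, (i < n)%nat -> x i < x (i + 1)%nat) i y :
  (1 <= i <= n)%nat -> in_piece n x i y -> x 0%nat <= y <= x n.
Proof.
  intros Hi [H1 H2]. assert (x 0%nat <= x (i-1)%nat) by (apply (x_mono n); auto; lia).
  assert (x i <= x n) by (apply (x_mono n); auto; lia).
  destruct (Nat.eqb i n); lra.
Qed.

Lemma piece_exists n x (Hn : (1 <= n)%nat) (Hxinc : forall i, (i < n)%nat -> x i < x (i + 1)%nat) y :
  x 0%nat <= y <= x n -> exists i, (1 <= i <= n)%nat /\ in_piece n x i y.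
Proof.
  intros Hy.
  assert (Hc : forall m, (m <= n)%nat -> x 0%nat <= y < x m ->
     exists i, (1 <= i <= m)%nat /\ x (i - 1)%nat <= y < x i).
  { induction m as [|m IH]; intros Hm Hym; [lra|].
    destruct (Rlt_dec y (x m)) as [Hl|Hl].
    - destruct IH as [i [Hi Hi']]; [lia|lra|]. exists i; split; [lia|auto].
    - exists (S m); split; [lia|]. replace (S m - 1)%nat with m by lia. lra. }
  destruct (Rlt_dec y (x n)) as [Hl|Hl].
  - destruct (Hc n (le_n n) ltac:(lra)) as [i [Hi [Hi1 Hi2]]]. exists i; split; auto.
    split; auto. destruct (Nat.eqb i n); lra.
  - exists n; split; [lia|]. split.
    + assert (x (n-1)%nat <= x n) by (apply (x_mono n); auto; lia). lra.
    + rewrite Nat.eqb_refl. lra.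
Qed.

Lemma Tpieces_piece n x (Hxinc : forall i, (i < n)%nat -> x i < x (i + 1)%nat) Sc li Lf g i y :
  (1 <= i <= n)%nat -> in_piece n x i y ->
  Tpieces n x Sc li Lf g n y = Sc i (li i y) * (g (li i y) - Lf (li i y)).
Proof.
  intros Hi Hp.
  assert (H : forall m, (m <= n)%nat -> Tpieces n x Sc li Lf g m y =
     if Nat.leb i m then Sc i (li i y) * (g (li i y) - Lf (li i y)) else 0).
  { induction m as [|m IH]; intros Hm; simpl.
    - destruct i; [lia|reflexivity].
    - rewrite IH by lia.
      destruct (Nat.eq_dec i (S m)) as [->|Hne].
      + assert (Hb : in_pieceb n x (S m) y = true) by (apply in_pieceb_spec; auto).
        rewrite Hb. rewrite Nat.leb_refl. assert (Hl : Nat.leb (S m) m = false) by (apply Nat.leb_gt; lia).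
        rewrite Hl. ring.
      + assert (Hb : in_pieceb n x (S m) y = false).
        { destruct (in_pieceb n x (S m) y) eqn:E; auto. apply in_pieceb_spec in E.
          exfalso. apply Hne. apply (piece_unique n x Hxinc i (S m) y); auto; lia. }
        rewrite Hb. destruct (Nat.leb i m) eqn:E1; destruct (Nat.leb i (S m)) eqn:E2;
        try ring; apply Nat.leb_le in E1 || apply Nat.leb_gt in E1;
        apply Nat.leb_le in E2 || apply Nat.leb_gt in E2; lia. }
  rewrite H by lia. assert (Hl : Nat.leb i n = true) by (apply Nat.leb_le; lia). rewrite Hl; auto.
Qed.

Lemma fin_min (P : nat -> R -> Prop) :
  (forall i d d', P i d -> 0 < d' <= d -> P i d') ->
  forall m, (forall i, (1 <= i <= m)%nat -> exists d, 0 < d /\ P i d) ->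
  exists d, 0 < d /\ forall i, (1 <= i <= m)%nat -> P i d.
Proof.
  intros Hmono m. induction m as [|m IH]; intros H.
  - exists 1; split; [lra|]. intros; lia.
  - destruct IH as [d1 [Hd1 H1]]. { intros i Hi; apply H; lia. }
    destruct (H (S m) ltac:(lia)) as [d2 [Hd2 H2]].
    exists (Rmin d1 d2); split. { apply Rmin_pos; auto. }
    intros i Hi. destruct (Nat.eq_dec i (S m)) as [->|].
    + apply Hmono with d2; auto. split; [apply Rmin_pos; auto| apply Rmin_r].
    + apply Hmono with d1; [apply H1; lia|]. split; [apply Rmin_pos; auto| apply Rmin_l].
Qed.

Lemma piecewise_cont n x (Hn : (1 <= n)%nat) (Hxinc : forall i, (i < n)%nat -> x i < x (i + 1)%nat)
  (h : R -> R) (Q : nat -> R -> R) :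
  (forall i, (1 <= i <= n)%nat -> cont_ed (x (i-1)%nat) (x i) (Q i)) ->
  (forall i, (1 <= i <= n)%nat -> forall z, x (i-1)%nat <= z <= x i -> h z = Q i z) ->
  cont_ed (x 0%nat) (x n) h.
Proof.
  intros HQ Hh y Hy eps He.
  destruct (fin_min (fun i d => forall z, x (i-1)%nat <= z <= x i -> Rabs (z - y) < d ->
       Rabs (h z - h y) < eps)) with (m := n) as [d [Hd Hd']].
  - intros i d d' Hd [Hd'1 Hd'2] z Hz Hzy. apply Hd; auto; lra.
  - intros i Hi. destruct (Rlt_dec y (x (i-1)%nat)) as [Hl|Hl].
    + exists (x (i-1)%nat - y); split; [lra|]. intros z Hz Hzy. exfalso.
      unfold Rabs in Hzy; destruct Rcase_abs; lra.
    + destruct (Rlt_dec (x i) y) as [Hr|Hr].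
      * exists (y - x i); split; [lra|]. intros z Hz Hzy. exfalso.
        unfold Rabs in Hzy; destruct Rcase_abs; lra.
      * destruct (HQ i Hi y ltac:(lra) eps He) as [d [Hd Hd']].
        exists d; split; auto. intros z Hz Hzy. rewrite (Hh i Hi z Hz), (Hh i Hi y ltac:(lra)).
        auto.
  - exists d; split; auto. intros z Hz Hzy.
    destruct (piece_exists n x Hn Hxinc z Hz) as [k [Hk [Hk1 Hk2]]].
    apply (Hd' k Hk); auto. split; auto. destruct (Nat.eqb k n); lra.
Qed.

Lemma eq_by_eps a b : (forall e, 0 < e -> Rabs (a - b) < e) -> a = b.
Proof.
  intros H. destruct (Req_dec a b) as [|Hne]; auto. exfalso.
  assert (0 < Rabs (a - b)) by (apply Rabs_pos_lt; lra).
  specialize (H _ H0). lra.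
Qed.

Lemma left_ed (T : R -> R) a c : filterlim T (at_left a) (locally c) ->
  forall e, 0 < e -> exists d, 0 < d /\ forall z, a - d < z < a -> Rabs (T z - c) < e.
Proof.
  intros H e He. destruct (proj1 (filterlim_locally _ _) H (mkposreal e He)) as [d Hd].
  exists d; split; [apply cond_pos|]. intros z Hz. apply ball_R. apply Hd; [|lra].
  apply ball_R. unfold Rabs; destruct Rcase_abs; simpl; lra.
Qed.

Lemma right_ed (T : R -> R) a c : filterlim T (at_right a) (locally c) ->
  forall e, 0 < e -> exists d, 0 < d /\ forall z, a < z < a + d -> Rabs (T z - c) < e.
Proof.
  intros H e He. destruct (proj1 (filterlim_locally _ _) H (mkposreal e He)) as [d Hd].
  exists d; split; [apply cond_pos|]. intros z Hz. apply ball_R. apply Hd; [|lra].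
  apply ball_R. unfold Rabs; destruct Rcase_abs; simpl; lra.
Qed.

Definition Pc (f Lf : R -> R) (Sc li : nat -> R -> R) (g : R -> R) i z :=
  f z + Sc i (li i z) * (g (li i z) - Lf (li i z)).

Lemma Tmap_P n x (Hxinc : forall i, (i < n)%nat -> x i < x (i + 1)%nat) f Lf Sc li g i z :
  (1 <= i <= n)%nat -> in_piece n x i z -> Tmap n x f Lf Sc li g z = Pc f Lf Sc li g i z.
Proof. intros. unfold Tmap, Pc. rewrite (Tpieces_piece n x Hxinc Sc li Lf g i z); auto. Qed.

Lemma Tmap_cont n x (Hn : (1 <= n)%nat) (Hxinc : forall i, (i < n)%nat -> x i < x (i + 1)%nat)
  f Lf Sc li g
  (Hf : cont_ed (x 0%nat) (x n) f) (HLf : cont_ed (x 0%nat) (x n) Lf)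
  (Hg : cont_ed (x 0%nat) (x n) g)
  (HS : forall i, (1 <= i <= n)%nat -> cont_ed (x 0%nat) (x n) (Sc i))
  (Hli_maps : forall i, (1 <= i <= n)%nat -> forall y, x (i - 1)%nat <= y <= x i ->
      x 0%nat <= li i y <= x n)
  (Hli_cont : forall i, (1 <= i <= n)%nat -> cont_ed (x (i - 1)%nat) (x i) (li i))
  (Hj : forall j, (1 <= j <= n - 1)%nat -> exists c : R,
        filterlim (Tmap n x f Lf Sc li g) (at_left (x j)) (locally c) /\
        filterlim (Tmap n x f Lf Sc li g) (at_right (x j)) (locally c)) :
  cont_ed (x 0%nat) (x n) (Tmap n x f Lf Sc li g).
Proof.
  assert (HP : forall i, (1 <= i <= n)%nat -> cont_ed (x (i-1)%nat) (x i) (Pc f Lf Sc li g i)).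
  { intros i Hi. unfold Pc.
    assert (H0 : x 0%nat <= x (i-1)%nat) by (apply (x_mono n); auto; lia).
    assert (H1 : x i <= x n) by (apply (x_mono n); auto; lia).
    apply cont_ed_plus; [apply (cont_ed_sub _ _ _ _ _ H0 H1 Hf)|].
    apply cont_ed_mult; [|apply cont_ed_minus];
      apply (cont_ed_comp _ _ (x 0%nat) (x n)); auto. }
  assert (HJ : forall j, (1 <= j <= n - 1)%nat ->
     Pc f Lf Sc li g j (x j) = Pc f Lf Sc li g (S j) (x j)).
  { intros j Hjj. destruct (Hj j Hjj) as [c [Hl Hr]].
    assert (Hlt : x (j-1)%nat < x j) by (apply (x_mono_lt n); auto; lia).
    assert (Hlt2 : x j < x (S j)) by (apply (x_mono_lt n); auto; lia).
    assert (E1 : Pc f Lf Sc li g j (x j) = c).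
    { apply eq_by_eps. intros e He.
      destruct (left_ed _ _ _ Hl (e/2) ltac:(lra)) as [d1 [Hd1 H1]].
      destruct (HP j ltac:(lia) (x j) ltac:(lra) (e/2) ltac:(lra)) as [d2 [Hd2 H2]].
      set (z := x j - Rmin (Rmin d1 d2) (x j - x (j-1)%nat) / 2).
      assert (Hm1 := Rmin_l (Rmin d1 d2) (x j - x (j-1)%nat)).
      assert (Hm2 := Rmin_r (Rmin d1 d2) (x j - x (j-1)%nat)).
      assert (Hm3 := Rmin_l d1 d2). assert (Hm4 := Rmin_r d1 d2).
      assert (Hmp : 0 < Rmin (Rmin d1 d2) (x j - x (j-1)%nat)) by
        (repeat apply Rmin_pos; lra).
      assert (Hz1 : x j - d1 < z < x j) by (unfold z; lra).
      assert (Hz2 : x (j-1)%nat <= z <= x j) by (unfold z; lra).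
      assert (Hz3 : Rabs (z - x j) < d2) by (unfold z; rewrite Rabs_left; lra).
      specialize (H1 z Hz1). specialize (H2 z Hz2 Hz3).
      assert (Hpz : in_piece n x j z).
      { split; [lra|]. replace (Nat.eqb j n) with false by (symmetry; apply Nat.eqb_neq; lia); lra. }
      rewrite (Tmap_P n x Hxinc f Lf Sc li g j z) in H1 by (auto; lia).
      unfold Rabs in *; repeat destruct Rcase_abs; lra. }
    assert (E2 : Pc f Lf Sc li g (S j) (x j) = c).
    { apply eq_by_eps. intros e He.
      destruct (right_ed _ _ _ Hr (e/2) ltac:(lra)) as [d1 [Hd1 H1]].
      destruct (HP (S j) ltac:(lia) (x j)) with (eps := e/2) as [d2 [Hd2 H2]];
        [replace (S j - 1)%nat with j by lia; lra|lra|].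
      replace (S j - 1)%nat with j in H2 by lia.
      set (z := x j + Rmin (Rmin d1 d2) (x (S j) - x j) / 2).
      assert (Hm1 := Rmin_l (Rmin d1 d2) (x (S j) - x j)).
      assert (Hm2 := Rmin_r (Rmin d1 d2) (x (S j) - x j)).
      assert (Hm3 := Rmin_l d1 d2). assert (Hm4 := Rmin_r d1 d2).
      assert (Hmp : 0 < Rmin (Rmin d1 d2) (x (S j) - x j)) by
        (repeat apply Rmin_pos; lra).
      assert (Hz1 : x j < z < x j + d1) by (unfold z; lra).
      assert (Hz2 : x j <= z <= x (S j)) by (unfold z; lra).
      assert (Hz4 : z < x (S j)) by (unfold z; lra).
      assert (Hz3 : Rabs (z - x j) < d2) by (unfold z; rewrite Rabs_right; lra).
      specialize (H1 z Hz1). specialize (H2 z Hz2 Hz3).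
      assert (Hpz : in_piece n x (S j) z).
      { split; [replace (S j - 1)%nat with j by lia; lra|]. destruct (Nat.eqb (S j) n); lra. }
      rewrite (Tmap_P n x Hxinc f Lf Sc li g (S j) z) in H1 by (auto; lia).
      unfold Rabs in *; repeat destruct Rcase_abs; lra. }
    congruence. }
  apply (piecewise_cont n x Hn Hxinc _ (Pc f Lf Sc li g)); auto.
  intros i Hi z Hz.
  destruct (Rlt_dec z (x i)) as [Hl|Hl].
  - apply (Tmap_P n x Hxinc); auto. split; [lra|]. destruct (Nat.eqb i n); lra.
  - assert (z = x i) by lra. subst z.
    destruct (Nat.eq_dec i n) as [->|Hne].
    + apply (Tmap_P n x Hxinc); auto. split; [lra|]. rewrite Nat.eqb_refl; lra.
    + rewrite (HJ i) by lia. apply (Tmap_P n x Hxinc); [lia|].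
      split; [replace (S i - 1)%nat with i by lia; lra|].
      assert (x i < x (S i)) by (apply (x_mono_lt n); auto; lia).
      destruct (Nat.eqb (S i) n); lra.
Qed.

Definition gseq (T : (R -> R) -> (R -> R)) (k : nat) : R -> R := Nat.iter k T (fun _ => 0).

Theorem theorem5p3
  (n : nat) (x : nat -> R) (l li Sc : nat -> R -> R)
  (L : (R -> R) -> (R -> R)) (f : R -> R)
  (Hn : (1 <= n)%nat)
  (Hx0 : 0 <= x 0%nat)
  (Hxinc : forall i, (i < n)%nat -> x i < x (i + 1)%nat)
  (Hl_maps : forall i, (1 <= i <= n)%nat -> forall y, x 0%nat <= y <= x n ->
      x (i - 1)%nat <= l i y <= x i)
  (Hli_maps : forall i, (1 <= i <= n)%nat -> forall y, x (i - 1)%nat <= y <= x i ->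
      x 0%nat <= li i y <= x n)
  (Hl_inv1 : forall i, (1 <= i <= n)%nat -> forall y, x 0%nat <= y <= x n ->
      li i (l i y) = y)
  (Hl_inv2 : forall i, (1 <= i <= n)%nat -> forall y, x (i - 1)%nat <= y <= x i ->
      l i (li i y) = y)
  (Hl_cont : forall i, (1 <= i <= n)%nat -> cont_on (x 0%nat) (x n) (l i))
  (Hli_cont : forall i, (1 <= i <= n)%nat -> cont_on (x (i - 1)%nat) (x i) (li i))
  (Hl_contr : forall i, (1 <= i <= n)%nat -> exists c, 0 <= c < 1 /\
      forall y z, x 0%nat <= y <= x n -> x 0%nat <= z <= x n ->
        Rabs (l i y - l i z) <= c * Rabs (y - z))
  (Hl_x0 : forall i, (1 <= i <= n)%nat -> l i (x 0%nat) = x (i - 1)%nat)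
  (Hl_xn : forall i, (1 <= i <= n)%nat -> l i (x n) = x i)
  (HL_maps : forall u, CplusI (x 0%nat) (x n) u -> CplusI (x 0%nat) (x n) (L u))
  (HL_semilin : semilinear (x 0%nat) (x n) L)
  (HL_bdd : bounded_op (x 0%nat) (x n) L)
  (Hf : CplusI (x 0%nat) (x n) f)
  (HS : forall i, (1 <= i <= n)%nat -> CplusI (x 0%nat) (x n) (Sc i))
  (HLf0 : L f (x 0%nat) = f (x 0%nat))
  (HLfn : L f (x n) = f (x n))
  (HT_nonneg : forall g, CplusI (x 0%nat) (x n) g ->
      forall y, x 0%nat <= y <= x n -> 0 <= Tmap n x f (L f) Sc li g y)
  (HT_joinup : forall g, CplusI (x 0%nat) (x n) g ->
      forall j, (1 <= j <= n - 1)%nat -> exists c : R,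
        filterlim (Tmap n x f (L f) Sc li g) (at_left (x j)) (locally c) /\
        filterlim (Tmap n x f (L f) Sc li g) (at_right (x j)) (locally c))
  (HSinf : exists Sinf, Sinf < 1 /\
      (forall i, (1 <= i <= n)%nat -> forall y, x 0%nat <= y <= x n ->
         Rabs (Sc i y) <= Sinf) /\
      (exists i y, (1 <= i <= n)%nat /\ x 0%nat <= y <= x n /\ Rabs (Sc i y) = Sinf)) :
  (exists k, 0 <= k < 1 /\
     forall g h, CplusI (x 0%nat) (x n) g -> CplusI (x 0%nat) (x n) h ->
       dI (x 0%nat) (x n) (Tmap n x f (L f) Sc li g) (Tmap n x f (L f) Sc li h)
         <= k * dI (x 0%nat) (x n) g h) /\
  (exists fs, CplusI (x 0%nat) (x n) fs /\
     (forall y, x 0%nat <= y <= x n -> Tmap n x f (L f) Sc li fs y = fs y) /\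
     (forall g, CplusI (x 0%nat) (x n) g ->
        (forall y, x 0%nat <= y <= x n -> Tmap n x f (L f) Sc li g y = g y) ->
        forall y, x 0%nat <= y <= x n -> g y = fs y) /\
     (forall i, (1 <= i <= n)%nat -> forall y, in_piece n x i y ->
        fs y = f y + Sc i (li i y) * (fs (li i y) - L f (li i y)))).
Proof.
  destruct HSinf as [s [Hs1 [Hs2 [i0 [y0 [Hi0 [Hy0 Hs0]]]]]]].
  assert (Hs0' : 0 <= s) by (rewrite <- Hs0; apply Rabs_pos).
  assert (HI : x 0%nat <= x n) by (apply (x_mono n); auto; lia).
  set (T := Tmap n x f (L f) Sc li).
  assert (Tdiff : forall g h y, x 0%nat <= y <= x n -> exists z, x 0%nat <= z <= x n /\
     Rabs (T g y - T h y) <= s * Rabs (g z - h z)).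
  { intros g h y Hy. destruct (piece_exists n x Hn Hxinc y Hy) as [i [Hi Hp]].
    assert (Hyi : x (i-1)%nat <= y <= x i).
    { destruct Hp as [Hp1 Hp2]. split; auto. destruct (Nat.eqb i n); lra. }
    exists (li i y); split; [apply Hli_maps; auto|].
    unfold T. rewrite !(Tmap_P n x Hxinc _ _ _ _ _ i y Hi Hp). unfold Pc.
    replace (f y + Sc i (li i y) * (g (li i y) - L f (li i y)) -
      (f y + Sc i (li i y) * (h (li i y) - L f (li i y)))) with
      (Sc i (li i y) * (g (li i y) - h (li i y))) by ring.
    rewrite Rabs_mult. apply Rmult_le_compat_r; [apply Rabs_pos|].
    apply Hs2; auto. }
  assert (Hcontr : forall g h, CplusI (x 0%nat) (x n) g -> CplusI (x 0%nat) (x n) h ->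
       dI (x 0%nat) (x n) (T g) (T h) <= s * dI (x 0%nat) (x n) g h).
  { intros g h [Hg _] [Hh _]. apply cont_on_ed in Hg. apply cont_on_ed in Hh.
    destruct (dI_props_c _ _ g h HI Hg Hh) as [D1 _].
    assert (HB : forall y, x 0%nat <= y <= x n -> Rabs (T g y - T h y) <= s * dI (x 0%nat) (x n) g h).
    { intros y Hy. destruct (Tdiff g h y Hy) as [z [Hz Hz']].
      eapply Rle_trans; [exact Hz'|]. apply Rmult_le_compat_l; auto. }
    destruct (dI_props _ _ (T g) (T h) _ HI HB) as [_ D2]. apply D2; auto. }
  split; [exists s; split; [split; auto| exact Hcontr]|].
  assert (Hfe : cont_ed (x 0%nat) (x n) f) by (apply cont_on_ed; apply Hf).
  assert (HLfe : cont_ed (x 0%nat) (x n) (L f)) by (apply cont_on_ed; apply (HL_maps f Hf)).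
  assert (HSe : forall i, (1 <= i <= n)%nat -> cont_ed (x 0%nat) (x n) (Sc i))
    by (intros i Hi; apply cont_on_ed; apply (HS i Hi)).
  assert (Hlie : forall i, (1 <= i <= n)%nat -> cont_ed (x (i-1)%nat) (x i) (li i))
    by (intros i Hi; apply cont_on_ed; apply (Hli_cont i Hi)).
  assert (HC : forall k, CplusI (x 0%nat) (x n) (gseq T k)).
  { induction k as [|k IH].
    - split; [apply cont_ed_on; apply cont_ed_const| intros; simpl; lra].
    - split; [|intros y Hy; apply HT_nonneg; auto].
      apply cont_ed_on. change (gseq T (S k)) with (T (gseq T k)).
      apply (Tmap_cont n x Hn Hxinc); auto;
      try (apply cont_on_ed; apply IH); try (apply HT_joinup; auto). }
  assert (HCe : forall k, cont_ed (x 0%nat) (x n) (gseq T k)) by (intros k; apply cont_on_ed; apply HC).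
  destruct (cont_ed_bounded _ _ (fun z => gseq T 1 z - gseq T 0 z) HI
     (cont_ed_minus _ _ _ _ (HCe 1%nat) (HCe 0%nat))) as [M HM].
  assert (HM0 : 0 <= M) by (eapply Rle_trans; [apply Rabs_pos| apply (HM (x 0%nat)); lra]).
  assert (Hstep : forall k y, x 0%nat <= y <= x n ->
     Rabs (gseq T (S k) y - gseq T k y) <= M * s ^ k).
  { induction k as [|k IH]; intros y Hy.
    - simpl pow. rewrite Rmult_1_r. apply HM; auto.
    - change (gseq T (S (S k))) with (T (gseq T (S k))).
      change (gseq T (S k)) with (T (gseq T k)) at 2.
      destruct (Tdiff (gseq T (S k)) (gseq T k) y Hy) as [z [Hz Hz']].
      eapply Rle_trans; [exact Hz'|]. simpl pow.
      specialize (IH z Hz). 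
      replace (M * (s * s ^ k)) with (s * (M * s ^ k)) by ring.
      apply Rmult_le_compat_l; auto. }
  set (E := fun k => M * s ^ k / (1 - s)).
  assert (HE0 : forall k, 0 <= E k).
  { intros k. unfold E. apply Rmult_le_pos; [apply Rmult_le_pos; auto; apply pow_le; auto|].
    left; apply Rinv_0_lt_compat; lra. }
  assert (HES : forall k, E (S k) = s * E k) by (intros k; unfold E; simpl pow; field; lra).
  assert (HEdec : forall k, E (S k) <= E k).
  { intros k. rewrite HES. assert (0 <= E k) by auto. nra. }
  assert (Hcauchy : forall k m y, x 0%nat <= y <= x n ->
     Rabs (gseq T (k + m) y - gseq T k y) <= E k - E (k + m)%nat).
  { intros k m y Hy. induction m as [|m IH].
    - rewrite Nat.add_0_r, Rminus_eq_0, Rabs_R0. lra.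
    - replace (gseq T (k + S m) y - gseq T k y) with
        ((gseq T (S (k + m)) y - gseq T (k + m) y) + (gseq T (k + m) y - gseq T k y))
        by (rewrite Nat.add_succ_r; ring).
      eapply Rle_trans; [apply Rabs_triang|].
      assert (H1 := Hstep (k + m)%nat y Hy).
      assert (HE : E (k + m)%nat - E (k + S m)%nat = M * s ^ (k + m)).
      { rewrite Nat.add_succ_r, HES. unfold E. field. lra. }
      lra. }
  assert (Hcauchy' : forall k m y, (k <= m)%nat -> x 0%nat <= y <= x n ->
     Rabs (gseq T m y - gseq T k y) <= E k).
  { intros k m y Hkm Hy. replace m with (k + (m - k))%nat by lia.
    assert (H := Hcauchy k (m - k)%nat y Hy). assert (H2 := HE0 (k + (m - k))%nat). lra. }
  assert (HEsmall : forall eps, 0 < eps -> exists N, forall k, (N <= k)%nat -> E k < eps).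
  { intros eps He.
    destruct (pow_lt_1_zero s ltac:(rewrite Rabs_right; lra) (eps * (1 - s) / (M + 1)))
      as [N HN].
    { apply Rdiv_lt_0_compat; [apply Rmult_lt_0_compat|]; lra. }
    exists N. intros k Hk. specialize (HN k Hk). rewrite Rabs_right in HN by (apply Rle_ge, pow_le; auto).
    unfold E. assert (0 <= s ^ k) by (apply pow_le; auto).
    apply (Rmult_lt_compat_r (M + 1)) in HN; [|lra].
    replace (eps * (1 - s) / (M + 1) * (M + 1)) with (eps * (1 - s)) in HN by (field; lra).
    apply (Rmult_lt_reg_r (1 - s)); [lra|].
    replace (M * s ^ k / (1 - s) * (1 - s)) with (M * s ^ k) by (field; lra). nra. }
  set (fs := fun y => real (Lim_seq (fun k => gseq T k y))).
  assert (Hlim : forall y, x 0%nat <= y <= x n -> is_lim_seq (fun k => gseq T k y) (fs y)).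
  { intros y Hy. apply Lim_seq_correct'. apply ex_lim_seq_cauchy_corr.
    intros eps. destruct (HEsmall (eps / 2)) as [N HN]; [destruct eps; simpl; lra|].
    exists N. intros p q Hp Hq.
    assert (H1 := Hcauchy' N p y Hp Hy). assert (H2 := Hcauchy' N q y Hq Hy).
    assert (H3 := HN N (le_n N)).
    replace (gseq T p y - gseq T q y) with ((gseq T p y - gseq T N y) - (gseq T q y - gseq T N y)) by ring.
    eapply Rle_lt_trans; [apply Rabs_triang|]. rewrite Rabs_Ropp.
    destruct eps; simpl in *; lra. }
  assert (Hfs : forall k y, x 0%nat <= y <= x n -> Rabs (fs y - gseq T k y) <= E k).
  { intros k y Hy. apply Rnot_lt_le. intros Hc.
    assert (Hp : 0 < Rabs (fs y - gseq T k y) - E k) by lra.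
    assert (HL := Hlim y Hy). apply is_lim_seq_spec in HL.
    destruct (HL (mkposreal _ Hp)) as [N HN].
    assert (H1 := HN (Nat.max N k) (Nat.le_max_l N k)). simpl in H1.
    assert (H2 := Hcauchy' k (Nat.max N k) y (Nat.le_max_r N k) Hy).
    assert (H3 : Rabs (fs y - gseq T k y) <= Rabs (gseq T (Nat.max N k) y - gseq T k y) + Rabs (gseq T (Nat.max N k) y - fs y)).
    { replace (fs y - gseq T k y) with ((gseq T (Nat.max N k) y - gseq T k y) + - (gseq T (Nat.max N k) y - fs y)) by ring.
      rewrite <- (Rabs_Ropp (gseq T (Nat.max N k) y - fs y)). apply Rabs_triang. }
    lra. }
  assert (Hfse : cont_ed (x 0%nat) (x n) fs).
  { intros y Hy eps He.
    destruct (HEsmall (eps / 3)) as [N HN]; [lra|].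
    destruct (HCe N y Hy (eps / 3)) as [d [Hd Hd']]; [lra|].
    exists d; split; auto. intros z Hz Hzy.
    assert (H1 := Hfs N z Hz). assert (H2 := Hfs N y Hy). assert (H3 := Hd' z Hz Hzy).
    assert (H4 := HN N (le_n N)).
    replace (fs z - fs y) with ((fs z - gseq T N z) + (gseq T N z - gseq T N y) + - (fs y - gseq T N y)) by ring.
    eapply Rle_lt_trans; [apply Rabs_triang|]. rewrite Rabs_Ropp.
    eapply Rle_lt_trans; [apply Rplus_le_compat_r; apply Rabs_triang|]. lra. }
  assert (Hfsnn : forall y, x 0%nat <= y <= x n -> 0 <= fs y).
  { intros y Hy. apply Rnot_lt_le. intros Hneg.
    destruct (HEsmall (- fs y)) as [N HN]; [lra|].
    assert (H1 := Hfs (S N) y Hy). assert (H2 := HN (S N) ltac:(lia)).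
    assert (H3 : 0 <= gseq T (S N) y) by (apply (proj2 (HC (S N))); auto).
    unfold Rabs in H1; destruct Rcase_abs in H1; lra. }
  assert (Hfix : forall y, x 0%nat <= y <= x n -> T fs y = fs y).
  { intros y Hy. apply eq_by_eps. intros e He.
    destruct (HEsmall (e / 2)) as [N HN]; [lra|].
    assert (H4 := HN N (le_n N)).
    destruct (Tdiff fs (gseq T N) y Hy) as [z [Hz Hz']].
    assert (H1 := Hfs N z Hz). assert (H2 := Hfs (S N) y Hy). assert (H3 := HEdec N).
    change (gseq T (S N)) with (T (gseq T N)) in H2.
    assert (H5 : s * Rabs (fs z - gseq T N z) <= E N).
    { assert (0 <= Rabs (fs z - gseq T N z)) by apply Rabs_pos. nra. }
    replace (T fs y - fs y) with ((T fs y - T (gseq T N) y) + - (fs y - T (gseq T N) y)) by ring.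
    eapply Rle_lt_trans; [apply Rabs_triang|]. rewrite Rabs_Ropp. lra. }
  exists fs. split; [split; [apply cont_ed_on; auto| auto]|].
  split; [exact Hfix|]. split.
  - intros g Hg Hgfix y Hy.
    assert (Hge : cont_ed (x 0%nat) (x n) g) by (apply cont_on_ed; apply Hg).
    destruct (dI_props_c _ _ g fs HI Hge Hfse) as [D1 D2].
    set (D := dI (x 0%nat) (x n) g fs) in *.
    assert (HB : D <= s * D).
    { apply D2. intros w Hw. rewrite <- (Hgfix w Hw), <- (Hfix w Hw).
      destruct (Tdiff g fs w Hw) as [z [Hz Hz']]. eapply Rle_trans; [exact Hz'|].
      apply Rmult_le_compat_l; auto. }
    assert (HD0 : 0 <= D) by (eapply Rle_trans; [apply Rabs_pos| apply (D1 y Hy)]).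
    assert (HD : D = 0) by nra.
    assert (H := D1 y Hy). rewrite HD in H.
    assert (Rabs (g y - fs y) = 0) by (apply Rle_antisym; auto; apply Rabs_pos).
    apply Rabs_eq_0 in H0. lra.
  - intros i Hi y Hp. assert (Hy := piece_in_I n x Hxinc i y Hi Hp).
    rewrite <- (Hfix y Hy). unfold T. rewrite (Tmap_P n x Hxinc _ _ _ _ _ i y Hi Hp).
    unfold Pc. reflexivity.
Qed.
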